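(* For every real number $\gamma>0$ there exists an approval-based committee election instance $(N,C,\mathbf{A},k)$ (with at least one cohesive group) whose maximum JR degree $c^\ast_{\mathrm{JR}}$ and maximum EJR degree $c^\ast_{\mathrm{EJR}}$ satisfy all of the following: (1) $c^\ast_{\mathrm{JR}}/c^\ast_{\mathrm{EJR}}>\gamma$; (2) every committee $W\subseteq C$ with $|W|=k$ whose EJR degree equals $c^\ast_{\mathrm{EJR}}$ has JR degree at most $c^\ast_{\mathrm{JR}}/\gamma$; (3) every committee $W\subseteq C$ with $|W|=k$ whose JR degree equals $c^\ast_{\mathrm{JR}}$ has EJR degree at most $c^\ast_{\mathrm{EJR}}/\gamma$.
   Context: An instance consists of a set of voters $N=\{1,\dots,n\}$, a set of candidates $C$, approval ballots $\mathbf{A}=(A_1,\dots,A_n)$ with $A_i\subseteq C$, and a committee size $k$ with $1\le k\le |C|$. For $\ell\in\mathbb{N}$, a set $N'\subseteq N$ is an $\ell$-cohesive group if $|N'|\ge \ell\cdot n/k$ and $|\bigcap_{i\in N'}A_i|\ge \ell$; a $1$-cohesive group is called a cohesive group. A committee $W\subseteq C$ with $|W|=k$ achieves JR degree $c$ if every cohesive group contains at least $c$ voters $i$ with $|A_i\cap W|\ge 1$; the JR degree of $W$ is the largest such $c$. $W$ achieves EJR degree $c$ if for every $\ell\in\{1,\dots,k\}$ every $\ell$-cohesive group contains at least $c$ voters $i$ with $|A_i\cap W|\ge \ell$; the EJR degree of $W$ is the largest such $c$. The maximum JR (resp. EJR) degree of an instance is the maximum of the JR (resp. EJR) degree over all size-$k$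 committees. Only instances with at least one cohesive group are considered. *)

(* Defs.v *)
From mathcomp Require Import all_boot all_order all_algebra.
From mathcomp Require Import reals.
Set Implicit Arguments. Unset Strict Implicit. Unset Printing Implicit Defensive.

Section ABC.
Variables (V C : finType).
Variable A : V -> {set C}.
Variable k : nat.

(* N' is an l-cohesive group: |N'| >= l * n / k (k >= 1) and the
   voters of N' jointly approve at least l candidates. *)
Definition cohesive (l : nat) (N' : {set V}) : bool :=
  (l * #|V| <= #|N'| * k)%N && (l <= #|\bigcap_(i in N') A i|)%N.

Definition has_cohesive_group : bool := [exists N' : {set V}, cohesive 1 N'].

Definition achieves_JR (W : {set C}) (c : nat) : bool :=
  [forall N' : {set V}, cohesive 1 N' ==>
     (c <= #|[set i in N' | (1 <= #|A i :&: W|)%N]|)%N].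

Definition achieves_EJR (W : {set C}) (c : nat) : bool :=
  [forall l : 'I_k.+1, (1 <= l)%N ==> [forall N' : {set V}, cohesive l N' ==>
     (c <= #|[set i in N' | (l <= #|A i :&: W|)%N]|)%N]].

(* the degree is the largest achieved c; when a cohesive group exists every
   achieved c is at most n = #|V|, so the search range 0..n is exhaustive,
   and c = 0 is always achieved. *)
Definition JR_degree (W : {set C}) : nat :=
  \max_(c < #|V|.+1 | achieves_JR W c) c.
Definition EJR_degree (W : {set C}) : nat :=
  \max_(c < #|V|.+1 | achieves_EJR W c) c.

Definition max_JR_degree : nat := \max_(W : {set C} | #|W| == k) JR_degree W.
Definition max_EJR_degree : nat := \max_(W : {set C} | #|W| == k) EJR_degree W.

End ABC.

(* Main.v *)
Require Import Defs.
From mathcomp Require Import all_boot all_order all_algebra.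
From mathcomp Require Import reals.
From mathcomp Require Import zify.
Import Order.TTheory GRing.Theory Num.Theory.
Set Implicit Arguments. Unset Strict Implicit. Unset Printing Implicit Defensive.

Section Inst.
Variable K : nat.
Local Notation k := K.+3.
Local Notation V := ('I_(k*k)).
Local Notation Cd := ('I_k.+2).

Definition Av (v : V) : {set Cd} :=
  [set x : Cd | ((x : nat) == v %/ k) || ((k <= (x : nat)) && (v %% k < 2))].
Definition ca : Cd := inord k.
Definition cb : Cd := inord k.+1.
Definition allc : {set Cd} := ~: [set ca; cb].
Definition W0 : {set Cd} := ~: [set (inord 0 : Cd); inord 1].

Lemma k_gt0 : 0 < k. Proof. by []. Qed.

Lemma ca_val : (ca : nat) = k. Proof. exact: inordK. Qed.
Lemma cb_val : (cb : nat) = k.+1. Proof. exact: inordK. Qed.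

Lemma allcP (x : Cd) : (x \in allc) = ((x : nat) < k).
Proof.
have := ltn_ord x.
by rewrite !inE -!val_eqE /= ca_val cb_val => h; apply/idP/idP; lia.
Qed.

Lemma W0P (x : Cd) : (x \in W0) = (2 <= (x : nat)).
Proof.
by rewrite !inE -!val_eqE /= !inordK //; apply/idP/idP; lia.
Qed.

Lemma cards_allc : #|allc| = k.
Proof.
have h : ca != cb by apply/eqP => /(congr1 (@nat_of_ord _)); rewrite ca_val cb_val; lia.
by rewrite /allc cardsCs setCK card_ord cards2 h.
Qed.

Lemma cards_W0 : #|W0| = k.
Proof.
have h : (inord 0 : Cd) != inord 1 by apply/eqP => /(congr1 (@nat_of_ord _)); rewrite !inordK.
by rewrite /W0 cardsCs setCK card_ord cards2 h.
Qed.

Lemma div_lt (v : V) : v %/ k < k.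
Proof. by rewrite ltn_divLR // ltn_ord. Qed.

Lemma Av_cases (v : V) (y : Cd) : y \in Av v ->
  ((y : nat) = v %/ k) \/ ((y = ca \/ y = cb) /\ v %% k < 2).
Proof.
rewrite inE => /orP[/eqP -> | /andP[h1 h2]]; first by left.
right; split=> //.
have := ltn_ord y => h3.
have : ((y : nat) == k) || ((y : nat) == k.+1) by lia.
by case/orP=> /eqP h; [left|right]; apply: val_inj; rewrite /= ?ca_val ?cb_val.
Qed.

Lemma cj_in (v : V) : (inord (v %/ k) : Cd) \in Av v.
Proof. by rewrite inE inordK ?eqxx //; have := div_lt v; lia. Qed.

Lemma ca_in (v : V) : v %% k < 2 -> ca \in Av v.
Proof. by move=> h; rewrite inE ca_val leqnn h orbT. Qed.
Lemma cb_in (v : V) : v %% k < 2 -> cb \in Av v.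
Proof. by move=> h; rewrite inE cb_val leqnSn h orbT. Qed.

Lemma Av_nG (v : V) : ~~ (v %% k < 2) -> Av v \subset [set inord (v %/ k)].
Proof.
move=> h; apply/subsetP => y /Av_cases [e|[_ h']]; last by rewrite h' in h.
rewrite inE; apply/eqP/val_inj; rewrite /= e inordK //; have := div_lt v; lia.
Qed.

Lemma card_block j (P : {set 'I_k}) :
  #|[set v : V | (v %/ k == j) && ((inord (v %% k) : 'I_k) \in P)]| <= #|P|.
Proof.
set S := [set v : V | _].
have inj : {in S &, injective (fun v : V => (inord (v %% k) : 'I_k))}.
  move=> u v; rewrite !inE => /andP[/eqP hu _] /andP[/eqP hv _] e.
  have : val (inord (u %% k) : 'I_k) = val (inord (v %% k) : 'I_k) by rewrite e.
  rewrite /= !inordK ?ltn_pmod // => em.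
  apply: val_inj; rewrite /= (divn_eq u k) (divn_eq v k) hu hv em //.
rewrite -(card_in_imset inj); apply: subset_leq_card; apply/subsetP => x.
by case/imsetP => v; rewrite inE => /andP[_ h] ->.
Qed.

Lemma card_blockG j : #|[set v : V | (v %/ k == j) && (v %% k < 2)]| <= 2.
Proof.
apply: leq_trans (_ : #|[set (inord 0 : 'I_k); inord 1]| <= 2); last first.
  by rewrite cards2; case: (_ != _).
apply: leq_trans (card_block j _); apply: subset_leq_card; apply/subsetP => v.
rewrite !inE => /andP[-> h] /=.
by case: (v %% k) h => [|[|]] //= _; rewrite eqxx ?orbT.
Qed.

Lemma card_blocknG j : #|[set v : V | (v %/ k == j) && ~~ (v %% k < 2)]| <= k - 2.
Proof.
have e : #|~: [set (inord 0 : 'I_k); inord 1]| = k - 2.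
  have h : (inord 0 : 'I_k) != inord 1 by apply/eqP => /(congr1 (@nat_of_ord _)); rewrite !inordK.
  by rewrite cardsCs setCK card_ord cards2 h.
rewrite -e; apply: leq_trans (card_block j _); apply: subset_leq_card; apply/subsetP => v.
rewrite !inE => /andP[-> h] /=; rewrite -!val_eqE /= !inordK ?ltn_pmod //.
by move: h; case: (v %% k) => [|[|]].
Qed.

Definition hj (j : nat) (hj : j < k) (i : 'I_k) : V.
refine (@Ordinal _ (j * k + i) _).
abstract (have := ltn_ord i; nia).
Defined.

Lemma card_Cj j (h : j < k) : k <= #|[set v : V | v %/ k == j]|.
Proof.
have inj : injective (hj h).
  by move=> x y /(congr1 (@nat_of_ord _)) /= e; apply: val_inj => /=; lia.
have e := card_imset [set: 'I_k] inj; rewrite cardsT card_ord in e.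
apply: (@leq_trans #|[set hj h x | x in [set: 'I_k]]|); first by rewrite e.
apply: subset_leq_card; apply/subsetP => v /imsetP[i _ ->].
by rewrite inE /= divnMDl // divn_small // addn0.
Qed.

Definition hG (p : 'I_k * 'I_2) : V.
refine (@Ordinal _ (p.1 * k + p.2) _).
abstract (have := ltn_ord p.1; have := ltn_ord p.2; nia).
Defined.

Lemma card_G : 2 * k <= #|[set v : V | v %% k < 2]|.
Proof.
have dv (p : 'I_k * 'I_2) : (val (hG p)) %/ k = p.1.
  by rewrite /= divnMDl // divn_small ?addn0 //; have := ltn_ord p.2; lia.
have mv (p : 'I_k * 'I_2) : (val (hG p)) %% k = p.2.
  by rewrite /= modnMDl modn_small //; have := ltn_ord p.2; lia.
have inj : injective hG.
  move=> [x1 x2] [y1 y2] e.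
  have e1 := dv (x1, x2); rewrite e dv /= in e1.
  have e2 := mv (x1, x2); rewrite e mv /= in e2.
  by congr pair; apply: val_inj.
have e := card_imset [set: 'I_k * 'I_2] inj.
rewrite cardsT card_prod !card_ord mulnC in e.
apply: (@leq_trans #|[set hG x | x in [set: 'I_k * 'I_2]]|); first by rewrite e.
apply: subset_leq_card; apply/subsetP => v /imsetP[p _ ->].
by rewrite inE mv ltn_ord.
Qed.

Lemma cab : ca != cb.
Proof. by apply/eqP => /(congr1 (@nat_of_ord _)); rewrite ca_val cb_val; lia. Qed.

Lemma cj_mem j (u : V) : j < k -> (inord j : Cd) \in Av u -> u %/ k = j.
Proof.
move=> hj /Av_cases [e|[[e|e] _]].
- by rewrite -e /= inordK //; lia.
- by move: (congr1 (@nat_of_ord _) e); rewrite ca_val /= inordK //; lia.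
- by move: (congr1 (@nat_of_ord _) e); rewrite cb_val /= inordK //; lia.
Qed.

Lemma JR_allc : achieves_JR Av k allc k.
Proof.
apply/forallP => N; apply/implyP => /andP[hc _].
rewrite card_ord mul1n in hc.
have hN : k <= #|N| by rewrite -(leq_pmul2r k_gt0).
apply: leq_trans hN _; apply: subset_leq_card; apply/subsetP => v hv.
rewrite inE hv /=; apply/card_gt0P; exists (inord (v %/ k)).
by rewrite inE cj_in allcP inordK ?div_lt //; have := div_lt v; lia.
Qed.

Lemma JR_small (W : {set Cd}) : #|W| = k -> W != allc -> JR_degree Av k W <= 2.
Proof.
move=> hW hne.
have : ~~ (allc \subset W).
  apply: contra hne => hs; rewrite eq_sym eqEcard hs hW cards_allc leqnn //.
case/subsetPn => x hx hxW; rewrite allcP in hx.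
set C := [set v : V | v %/ k == x].
have coh : cohesive Av k 1 C.
  rewrite /cohesive card_ord mul1n; apply/andP; split.
  - by rewrite leq_pmul2r // card_Cj.
  - apply/card_gt0P; exists x; apply/bigcapP => v; rewrite inE => /eqP hv.
    by rewrite inE hv eqxx.
apply/bigmax_leqP => c hc.
have := forallP hc C; rewrite coh /= => h.
apply: leq_trans h _; apply: leq_trans (card_blockG x).
apply: subset_leq_card; apply/subsetP => v; rewrite !inE => /andP[hv /card_gt0P [y]].
rewrite inE => /andP[/Av_cases [e|[_ h2]] hyW].
- have eyx : y = x by apply: val_inj; rewrite /= e; move/eqP: hv.
  by move: hyW; rewrite eyx (negbTE hxW).
- by rewrite hv h2.
Qed.

Lemma Av_allc (v : V) : #|Av v :&: allc| <= 1.
Proof.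
apply: leq_trans (_ : #|[set (inord (v %/ k) : Cd)]| <= 1); last by rewrite cards1.
apply: subset_leq_card; apply/subsetP => y; rewrite inE => /andP[/Av_cases hy].
rewrite allcP inE => hyk; case: hy => [e|[[e|e] _]].
- apply/eqP/val_inj; rewrite /= e inordK //; have := div_lt v; lia.
- by rewrite e ca_val in hyk; lia.
- by rewrite e cb_val in hyk; lia.
Qed.

Lemma EJR_allc : EJR_degree Av k allc = 0.
Proof.
apply/eqP; rewrite -leqn0; apply/bigmax_leqP => c hc.
set G := [set v : V | v %% k < 2].
have l2 : 2 < k.+1 by [].
have coh : cohesive Av k 2 G.
  rewrite /cohesive card_ord; apply/andP; split.
  - by rewrite mulnA leq_pmul2r // card_G.
  - apply: leq_trans (_ : 2 <= #|[set ca; cb]|) _; first by rewrite cards2 cab.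
    apply: subset_leq_card; apply/subsetP => y; rewrite !inE => /orP[] /eqP ->;
      apply/bigcapP => v; rewrite inE => hv; [exact: ca_in | exact: cb_in].
move/forallP: hc => /(_ (Ordinal l2)) /= /forallP /(_ G) /implyP /(_ coh) h.
apply: leq_trans h _; rewrite leqn0 cards_eq0; apply/eqP/setP => v.
rewrite !inE; apply/negbTE; apply/negP => /andP[_ h2].
by have := leq_trans h2 (Av_allc v).
Qed.

Lemma EJR_le_JR (W : {set Cd}) : EJR_degree Av k W <= JR_degree Av k W.
Proof.
apply/bigmax_leqP => c hc; apply: leq_bigmax_cond.
apply/forallP => N; apply/implyP => hN.
have l1 : 1 < k.+1 by [].
by move/forallP: hc => /(_ (Ordinal l1)) /= /forallP /(_ N) /implyP; apply.
Qed.

Lemma EJR_W0 : achieves_EJR Av k W0 1.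
Proof.
apply/forallP => l; apply/implyP => hl; apply/forallP => N; apply/implyP => /andP[hc hD].
rewrite card_ord in hc.
have hN : k <= #|N|.
  have h1 : 1 * (k * k) <= l * (k * k) by rewrite leq_mul2r hl orbT.
  by move: (leq_trans h1 hc); rewrite mul1n leq_pmul2r.
set D := \bigcap_(i in N) Av i in hD.
have DA u : u \in N -> D \subset Av u by move=> h; apply: bigcap_inf.
have [v0 hv0] : exists v0, v0 \in N by apply/card_gt0P; lia.
have hv0k := div_lt v0.
apply/card_gt0P.
have nG u : u \in N -> 1 < l -> u %% k < 2.
  move=> hu hl2; apply/negP => hn.
  have := leq_trans hD (subset_leq_card (subset_trans (DA u hu) (Av_nG (introN idP hn)))).
  by rewrite cards1; lia.
case: (ltnP 2 l) => hl3.
  exfalso.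
  set c0 : Cd := inord (v0 %/ k).
  have c0D : c0 \in D.
    apply/negPn/negP => hc0.
    have : D \subset [set ca; cb].
      apply/subsetP => y hy.
      case: (Av_cases (subsetP (DA v0 hv0) y hy)) => [e|[[->|->] _]];
        rewrite ?inE ?eqxx ?orbT //.
      have eyc : y = c0 by apply: val_inj; rewrite /= e inordK //; lia.
      by move: hc0; rewrite -eyc hy.
    move/subset_leq_card; rewrite cards2 cab => hh.
    by have := leq_trans hD hh; lia.
  have : N \subset [set v : V | (v %/ k == v0 %/ k) && (v %% k < 2)].
    apply/subsetP => u hu; rewrite inE (nG u hu) ?andbT; last by lia.
    by rewrite (cj_mem hv0k (subsetP (DA u hu) _ c0D)).
  move/subset_leq_card => hh; have := leq_trans hh (card_blockG _); lia.
case: (ltnP 1 l) => hl2.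
  exists v0; rewrite inE hv0 /=.
  apply: leq_trans hl3 _.
  apply: leq_trans (_ : 2 <= #|[set ca; cb]|) _; first by rewrite cards2 cab.
  apply: subset_leq_card; apply/subsetP => y /set2P [] ->.
  - by rewrite inE ca_in ?(nG v0 hv0 hl2) // W0P ca_val.
  - by rewrite inE cb_in ?(nG v0 hv0 hl2) // W0P cb_val.
have hl1 : nat_of_ord l = 1 by lia.
rewrite hl1.
case hG0 : (v0 %% k < 2).
  exists v0; rewrite inE hv0 /=; apply/card_gt0P; exists ca.
  by rewrite inE ca_in // W0P ca_val.
case hb : (2 <= v0 %/ k).
  exists v0; rewrite inE hv0 /=; apply/card_gt0P; exists (inord (v0 %/ k)).
  by rewrite inE cj_in W0P inordK //; lia.
set c0 : Cd := inord (v0 %/ k).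
have c0D : c0 \in D.
  have : 0 < #|D| by lia.
  case/card_gt0P => y hy.
  have := subsetP (Av_nG (negbT hG0)) y (subsetP (DA v0 hv0) y hy).
  by rewrite inE => /eqP e; rewrite /c0 -e.
case: (pickP [pred u | (u \in N) && (u %% k < 2)]) => [u /andP[hu hu2] | hnone].
  exists u; rewrite inE hu /=; apply/card_gt0P; exists ca.
  by rewrite inE ca_in // W0P ca_val.
exfalso.
have : N \subset [set v : V | (v %/ k == v0 %/ k) && ~~ (v %% k < 2)].
  apply/subsetP => u hu; rewrite inE.
  have := hnone u; rewrite /= hu /= => ->; rewrite andbT.
  by rewrite (cj_mem hv0k (subsetP (DA u hu) _ c0D)).
move/subset_leq_card => hh; have := leq_trans hh (card_blocknG _); lia.
Qed.

End Inst.

Local Open Scope ring_scope.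

Theorem proposition1 (R : realType) (gamma : R) (hgamma : 0 < gamma) :
  exists (n m : nat) (A : 'I_n -> {set 'I_m}) (k : nat),
    [/\ [&& (0 < n)%N, (1 <= k <= m)%N & has_cohesive_group A k],
        gamma < (max_JR_degree A k)%:R / (max_EJR_degree A k)%:R :> R,
        (forall W : {set 'I_m}, #|W| = k ->
           EJR_degree A k W = max_EJR_degree A k ->
           (JR_degree A k W)%:R <= (max_JR_degree A k)%:R / gamma :> R)
      & (forall W : {set 'I_m}, #|W| = k ->
           JR_degree A k W = max_JR_degree A k ->
           (EJR_degree A k W)%:R <= (max_EJR_degree A k)%:R / gamma :> R)].
Proof.
set K := Num.Def.archi_bound (2 * gamma).
have hK : 2 * gamma < K%:R.
  by apply: archi_boundP; rewrite mulr_ge0 // ltW.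
exists (K.+3 * K.+3)%N, K.+4.+1, (@Av K), K.+3.
set MJ := max_JR_degree _ _; set ME := max_EJR_degree _ _.
have JRa : (K.+3 <= JR_degree (@Av K) K.+3 (allc K))%N.
  have hc : (K.+3 < #|'I_(K.+3 * K.+3)|.+1)%N by rewrite card_ord ltnS leq_pmull.
  exact: (leq_bigmax_cond (Ordinal hc) (@JR_allc K)).
have hMJ : (K.+3 <= MJ)%N.
  apply: leq_trans JRa _; apply: (leq_bigmax_cond (allc K)).
  by rewrite cards_allc.
have hMEl : (1 <= ME)%N.
  have hc : (1 < #|'I_(K.+3 * K.+3)|.+1)%N by rewrite card_ord ltnS muln_gt0.
  apply: leq_trans (_ : (1 <= EJR_degree (@Av K) K.+3 (W0 K))%N) _.
    exact: (leq_bigmax_cond (Ordinal hc) (@EJR_W0 K)).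
  by apply: (leq_bigmax_cond (W0 K)); rewrite cards_W0.
have JRs (W : {set 'I_K.+4.+1}) : #|W| = K.+3 -> W != allc K ->
    (JR_degree (@Av K) K.+3 W <= 2)%N.
  by move=> h1 h2; apply: JR_small.
have hMEu : (ME <= 2)%N.
  apply/bigmax_leqP => W /eqP hW.
  case: (eqVneq W (allc K)) => [->|hne]; first by rewrite EJR_allc.
  exact: leq_trans (EJR_le_JR _) (JRs W hW hne).
have hg2 : (2 : R) <= MJ%:R / gamma.
  rewrite ler_pdivlMr //; apply: (le_trans (ltW hK)).
  by rewrite ler_nat; apply: leq_trans _ hMJ; lia.
split.
- apply/and3P; split; [by rewrite muln_gt0 | by apply/andP; split; lia | ].
  apply/existsP; exists [set v : 'I_(K.+3 * K.+3) | v %/ K.+3 == 0]%N.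
  rewrite /cohesive card_ord mul1n leq_pmul2r // card_Cj //=.
  apply/card_gt0P; exists (inord 0); apply/bigcapP => v; rewrite inE => /eqP hv.
  by rewrite inE inordK // hv.
- rewrite ltr_pdivlMr ?ltr0n //.
  apply: (@le_lt_trans _ _ (gamma * 2)).
    by rewrite ler_pM2l // ler_nat.
  rewrite mulrC; apply: (lt_le_trans hK).
  by rewrite ler_nat; apply: leq_trans _ hMJ; lia.
- move=> W hW hE.
  have hne : W != allc K.
    apply/eqP => e; move: hE; rewrite e EJR_allc => e0.
    by rewrite -e0 in hMEl.
  apply: le_trans hg2; rewrite ler_nat; exact: JRs.
- move=> W hW hJ.
  case: (eqVneq W (allc K)) => [->|hne].
    by rewrite EJR_allc divr_ge0 // ltW.
  have := JRs W hW hne; rewrite hJ => h.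
  by have := leq_trans hMJ h.
Qed.
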